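(* Let $L$ be an $n\times n$ nonsingular M-matrix with integer entries and nonnegative row sums. Then every equivalence class of $\mathbb{Z}^n$ under $\sim$ contains a unique energy minimizer, a unique $z$-superstable configuration and a unique $\chi$-superstable configuration, and these three configurations coincide.
   Context: A Z-matrix is a square real matrix whose off-diagonal entries are all $\le 0$. A nonsingular M-matrix is a Z-matrix $L$ that is invertible with $L^{-1}$ having all entries nonnegative. Vector inequalities are entrywise. For $f,g\in\mathbb{Z}^n$, $f\sim g$ means $g-f=Lz$ for some $z\in\mathbb{Z}^n$. For $q\in\mathbb{Z}^n$, $E(q)=\|L^{-1}q\|_2^2$; an energy minimizer in the class of $f$ is a $g\in\mathbb{Z}^n$, $g\ge0$, $g\sim f$, minimizing $E$ among all such vectors. A vector $f\in\mathbb{Z}^n$ with $f\ge0$ is $\chi$-superstable if for every $\chi\in\{0,1\}^n$, $\chi\ne0$, there is $i$ with $f_i-(L\chi)_i<0$; it is $z$-superstable if for every $z\in\mathbb{Z}^n$, $z\ge0$, $z\ne0$, there is $i$ with $f_i-(Lz)_i<0$. *)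

(* Defs.v *)
From HB Require Import structures.
From mathcomp Require Import all_boot all_order all_algebra.
Set Implicit Arguments. Unset Strict Implicit. Unset Printing Implicit Defensive.
Import Order.TTheory GRing.Theory Num.Theory.
Local Open Scope ring_scope.

(* The integer matrix L viewed over the rationals (to speak of L^{-1}). *)
Definition Lrat (n : nat) (L : 'M[int]_n) : 'M[rat]_n :=
  map_mx (fun x : int => x%:~R) L.

Definition Z_matrix (n : nat) (L : 'M[int]_n) : Prop :=
  forall i j : 'I_n, i != j -> L i j <= 0.

Definition nonsingular_M_matrix (n : nat) (L : 'M[int]_n) : Prop :=
  [/\ Z_matrix L, Lrat L \in unitmx & forall i j : 'I_n, 0 <= invmx (Lrat L) i j].

Definition nonneg_row_sums (n : nat) (L : 'M[int]_n) : Prop :=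
  forall i : 'I_n, 0 <= \sum_(j < n) L i j.

Definition vnonneg (n : nat) (v : 'cV[int]_n) : Prop :=
  forall i : 'I_n, 0 <= v i 0.

Definition lequiv (n : nat) (L : 'M[int]_n) (f g : 'cV[int]_n) : Prop :=
  exists z : 'cV[int]_n, g - f = L *m z.

Definition energy (n : nat) (L : 'M[int]_n) (q : 'cV[int]_n) : rat :=
  \sum_(i < n) ((invmx (Lrat L) *m map_mx (fun x : int => x%:~R) q) i 0) ^+ 2.

Definition energy_minimizer (n : nat) (L : 'M[int]_n) (f g : 'cV[int]_n) : Prop :=
  [/\ vnonneg g, lequiv L f g &
      forall h : 'cV[int]_n, vnonneg h -> lequiv L f h -> energy L g <= energy L h].

Definition chi_superstable (n : nat) (L : 'M[int]_n) (f : 'cV[int]_n) : Prop :=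
  vnonneg f /\
  forall chi : 'cV[int]_n, (forall i, chi i 0 = 0 \/ chi i 0 = 1) -> chi != 0 ->
    exists i : 'I_n, f i 0 - (L *m chi) i 0 < 0.

Definition z_superstable (n : nat) (L : 'M[int]_n) (f : 'cV[int]_n) : Prop :=
  vnonneg f /\
  forall z : 'cV[int]_n, vnonneg z -> z != 0 ->
    exists i : 'I_n, f i 0 - (L *m z) i 0 < 0.

(* Main.v *)
Require Import Defs.
From HB Require Import structures.
From mathcomp Require Import all_boot all_order all_algebra.
From mathcomp Require Import zify ring lra.
From Stdlib Require Import Classical.
Set Implicit Arguments. Unset Strict Implicit. Unset Printing Implicit Defensive.
Import Order.TTheory GRing.Theory Num.Theory.
Local Open Scope ring_scope.



Definition vr (n : nat) (v : 'cV[int]_n) : 'cV[rat]_n := map_mx (fun x : int => x%:~R) v.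

Lemma vrM n (L : 'M[int]_n) z : vr (L *m z) = Lrat L *m vr z.
Proof. by rewrite /vr /Lrat map_mxM. Qed.

Lemma vrD n (a b : 'cV[int]_n) : vr (a + b) = vr a + vr b.
Proof. by rewrite /vr map_mxD. Qed.

Lemma vrB n (a b : 'cV[int]_n) : vr (a - b) = vr a - vr b.
Proof. by rewrite /vr map_mxB. Qed.

Lemma Bshift n (L : 'M[int]_n) (hM : nonsingular_M_matrix L) g w :
  invmx (Lrat L) *m vr (g + L *m w) = invmx (Lrat L) *m vr g + vr w.
Proof.
case: hM => _ hU _.
by rewrite vrD mulmxDr vrM mulmxA mulVmx // mul1mx.
Qed.

Lemma Bnonneg n (L : 'M[int]_n) (hM : nonsingular_M_matrix L) v :
  vnonneg v -> forall i, 0 <= (invmx (Lrat L) *m vr v) i 0.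
Proof.
case: hM => _ _ hB hv i; rewrite mxE; apply: sumr_ge0 => j _.
by apply: mulr_ge0; rewrite // /vr mxE ler0z.
Qed.

Lemma Lv_le0 n (L : 'M[int]_n) (hZ : Z_matrix L) (v : 'cV[int]_n) i :
  vnonneg v -> v i 0 = 0 -> (L *m v) i 0 <= 0.
Proof.
move=> hv hv0; rewrite mxE; apply: sumr_le0 => j _.
case: (eqVneq i j) => [<-|nij]; first by rewrite hv0 mulr0.
by apply: mulr_le0_ge0; [apply: hZ|apply: hv].
Qed.

Lemma pos_part n (L : 'M[int]_n) (hZ : Z_matrix L) g h z :
  z_superstable L g -> vnonneg h -> h = g - L *m z -> forall i, z i 0 <= 0.
Proof.
move=> [hg hss] hh hdef i0; rewrite leNgt; apply/negP => hpos.
pose zp : 'cV[int]_n := \col_i (if 0 < z i 0 then z i 0 else 0).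
pose zm : 'cV[int]_n := \col_i (if 0 < z i 0 then 0 else - z i 0).
have hzp : vnonneg zp.
  by move=> i; rewrite mxE; case: ifP => // /ltW.
have hzm : vnonneg zm.
  by move=> i; rewrite mxE; case: ifP => // /negbT; rewrite -leNgt oppr_ge0.
have hz : z = zp - zm.
  by apply/matrixP => i j; rewrite ord1 !mxE; case: ifP => _; rewrite ?subr0 ?sub0r ?opprK.
have nz : zp != 0.
  apply/negP => /eqP /matrixP /(_ i0 0); rewrite !mxE hpos => hz0.
  by move: hpos; rewrite hz0 ltxx.
have [i hi] := hss zp hzp nz.
move: hi; apply/negP; rewrite -leNgt.
case hzi: (0 < z i 0).
- have hzmi : zm i 0 = 0 by rewrite mxE hzi.
  have := Lv_le0 hZ hzm hzmi.
  have := hh i; rewrite hdef hz mulmxBr opprB !mxE => hhi hle.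
  lra.
- have hzpi : zp i 0 = 0 by rewrite mxE hzi.
  have := Lv_le0 hZ hzp hzpi; have := hg i; lra.
Qed.



Lemma int_aux1 (a b : int) : b != 0 -> 0 <= b -> b <= a -> 1 <= a.
Proof. lia. Qed.
Lemma int_aux2 (a b : int) : b <= a -> b != a -> b <= a - 1.
Proof. lia. Qed.

Lemma nonzero_entry n (z : 'cV[int]_n) : z != 0 -> exists i, z i 0 != 0.
Proof.
move=> nz; apply/existsP; apply: contraR nz => /existsPn H.
by apply/eqP/matrixP => i j; rewrite ord1 mxE; apply/eqP/negPn/H.
Qed.

Lemma zss_chi n (L : 'M[int]_n) f : z_superstable L f -> chi_superstable L f.
Proof.
move=> [hf hss]; split => // chi hchi nz; apply: hss nz => i.
by case: (hchi i) => ->.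
Qed.

Lemma chi_zss n (L : 'M[int]_n) (hZ : Z_matrix L) (hrow : nonneg_row_sums L) f :
  chi_superstable L f -> z_superstable L f.
Proof.
move=> [hf hss]; split => // z hz nz.
have [j0 hj0] := nonzero_entry nz.
pose imx := [arg max_(i > j0) `|(z i 0)%R|%N].
have [im _ himax] : extremum_spec geq predT (fun i => `|(z i 0)%R|%N) imx.
  exact: arg_maxnP.
pose m := z im 0.
have habs i : z i 0 = (absz (z i 0))%:Z by rewrite gez0_abs // hz.
have hmax i : z i 0 <= m.
  by rewrite /m habs [z im 0]habs lez_nat; apply: himax.
have hm1 : 1 <= m.
  exact: int_aux1 hj0 (hz j0) (hmax j0).
have hmdef : z im 0 = m by [].
clearbody m.
pose chi : 'cV[int]_n := \col_i (z i 0 == m)%:R.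
have hchiE i : chi i 0 = (z i 0 == m)%:R by rewrite mxE.
have hchi i : chi i 0 = 0 \/ chi i 0 = 1.
  by rewrite hchiE; case: (z i 0 == m); [right|left].
have nchi : chi != 0.
  apply/negP => /eqP /matrixP /(_ im 0); rewrite hchiE mxE hmdef eqxx => /eqP.
  by rewrite oner_eq0.
clearbody chi.
have [i hi] := hss chi hchi nchi.
exists i; move: hi.
case hzi: (z i 0 == m).
- suff hle : (L *m chi) i 0 <= (L *m z) i 0.
    by move=> hi; apply: le_lt_trans hi; rewrite lerD2l lerN2.
  rewrite -subr_ge0 mxE [X in _ - X]mxE -sumrB.
  apply: (@le_trans _ _ (\sum_j L i j * (m - 1))).
    by rewrite -mulr_suml; apply: mulr_ge0; [apply: hrow|rewrite subr_ge0].
  apply: ler_sum => j _; rewrite -mulrBr hchiE.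
  case hzj: (z j 0 == m).
    by move/eqP: hzj => ->; rewrite lexx.
  have nij : i != j by apply: contraFneq hzj => <-.
  have hLij := hZ _ _ nij.
  have hzjm : z j 0 <= m - 1.
    exact: int_aux2 (hmax j) (negbT hzj).
  rewrite subr0 -subr_ge0 -mulrBr.
  by apply: mulr_le0 => //; rewrite subr_le0.
- have hc : chi i 0 = 0 by rewrite hchiE hzi.
  have h1 : vnonneg chi by move=> k; case: (hchi k) => ->.
  have := Lv_le0 hZ h1 hc.
  have := hf i => hfi hL hi; exfalso; move: hi; apply/negP.
  rewrite -leNgt subr_ge0; exact: le_trans hL hfi.
Qed.



Lemma lequiv_sym n (L : 'M[int]_n) f g : lequiv L f g -> lequiv L g f.
Proof. by move=> [z hz]; exists (- z); rewrite mulmxN -hz opprB. Qed.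

Lemma lequiv_trans n (L : 'M[int]_n) f g h :
  lequiv L f g -> lequiv L g h -> lequiv L f h.
Proof.
move=> [z1 h1] [z2 h2]; exists (z1 + z2).
by rewrite mulmxDr -h1 -h2 [RHS]addrC addrA subrK.
Qed.

Lemma zss_unique n (L : 'M[int]_n) (hZ : Z_matrix L) g h :
  z_superstable L g -> z_superstable L h -> lequiv L g h -> h = g.
Proof.
move=> hg hh [z hz].
have e1 : h = g - L *m (- z) by rewrite mulmxN opprK -hz addrC subrK.
have e2 : g = h - L *m z by rewrite -hz opprB addrC subrK.
have p1 := pos_part hZ hg hh.1 e1.
have p2 := pos_part hZ hh hg.1 e2.
have z0 : z = 0.
  apply/matrixP => i j; rewrite ord1 mxE.
  have := p1 i; have := p2 i; rewrite mxE; lra.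
by move: hz; rewrite z0 mulmx0 => /eqP; rewrite subr_eq0 => /eqP.
Qed.

Lemma above n (L : 'M[int]_n) (hZ : Z_matrix L) g h :
  z_superstable L g -> vnonneg h -> lequiv L g h ->
  exists w, vnonneg w /\ h = g + L *m w.
Proof.
move=> hg hh [z hz]; exists z; split.
  have e1 : h = g - L *m (- z) by rewrite mulmxN opprK -hz addrC subrK.
  move=> i; have := pos_part hZ hg hh e1 i; rewrite mxE; lra.
by rewrite -hz addrC subrK.
Qed.

Lemma energy_above n (L : 'M[int]_n) (hM : nonsingular_M_matrix L) g w :
  vnonneg g -> vnonneg w ->
  energy L g + \sum_i (vr w i 0) ^+ 2 <= energy L (g + L *m w).
Proof.
move=> hg hw; rewrite /energy.
have -> : map_mx (fun x : int => x%:~R) (g + L *m w) = vr (g + L *m w) :> 'cV[rat]_n by [].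
rewrite Bshift // -big_split /=; apply: ler_sum => i _.
have h1 := Bnonneg hM hg i.
have h2 : 0 <= vr w i 0 by rewrite mxE ler0z.
rewrite [X in _ <= X ^+ 2]mxE.
move: h1 h2; move: ((invmx (Lrat L) *m vr g) i 0) (vr w i 0) => x y h1 h2.
nra.
Qed.

Lemma sq_sum0 n (w : 'cV[int]_n) :
  \sum_i (vr w i 0) ^+ 2 <= 0 -> w = 0.
Proof.
move=> hs; apply/matrixP => i j; rewrite ord1 mxE.
have : (vr w i 0) ^+ 2 <= 0.
  apply: le_trans hs; rewrite (bigD1 i) //= lerDl.
  by apply: sumr_ge0 => k _; apply: sqr_ge0.
rewrite /vr mxE => h.
have : (w i 0)%:~R = 0 :> rat.
  by apply/eqP; rewrite -sqrf_eq0 eq_le h sqr_ge0.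
by move/eqP; rewrite intr_eq0 => /eqP.
Qed.



Lemma int_aux3 (a c d : int) : `|a| <= c -> 1 <= d -> 0 <= a + c * d.
Proof. nia. Qed.

Lemma int_aux4 (d : int) : d != 0 -> 1 <= `|d|.
Proof. lia. Qed.

Lemma int_aux5 (N s s' : int) (d : nat) : N - s <= (d.+1)%:Z -> s + 1 <= s' -> N - s' <= d%:Z.
Proof. lia. Qed.

Lemma subE m n (a b : 'M[int]_(m, n)) i j : (a - b) i j = a i j - b i j.
Proof. by rewrite !mxE. Qed.
Lemma addE m n (a b : 'M[int]_(m, n)) i j : (a + b) i j = a i j + b i j.
Proof. by rewrite mxE. Qed.
Lemma addEq m n (a b : 'M[rat]_(m, n)) i j : (a + b) i j = a i j + b i j.
Proof. by rewrite mxE. Qed.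

Lemma int_aux6 (b s : int) : b != 0 -> 0 <= b -> 0 <= s -> 1 <= b + s.
Proof. lia. Qed.

Lemma int_aux7 (N s s' : int) : N - s <= 0%N%:Z -> s + 1 <= s' -> s' < N -> False.
Proof. lia. Qed.

Lemma not_zss n (L : 'M[int]_n) g : vnonneg g -> ~ z_superstable L g ->
  exists z, vnonneg z /\ z != 0 /\ vnonneg (g - L *m z).
Proof.
move=> hg hn; apply: NNPP => hc; apply: hn; split => // z hz nz.
apply: NNPP => he; apply: hc; exists z; split => //; split => // i.
rewrite subE leNgt; apply/negP => hlt.
by apply: he; exists i.
Qed.

Lemma sum_ge1 n (z : 'cV[int]_n) : vnonneg z -> z != 0 -> 1 <= \sum_i z i 0.
Proof.
move=> hz nz; have [j hj] := nonzero_entry nz.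
rewrite (bigD1 j) //=.
have h1 : 0 <= \sum_(i | i != j) z i 0 by apply: sumr_ge0 => i _; apply: hz.
exact: int_aux6 hj (hz j) h1.
Qed.

Lemma det_nz n (L : 'M[int]_n) : nonsingular_M_matrix L -> \det L != 0.
Proof.
case=> _ hU _; move: hU; rewrite unitmxE /Lrat det_map_mx unitfE.
by rewrite intr_eq0.
Qed.

Lemma existence n (L : 'M[int]_n) (hM : nonsingular_M_matrix L) f :
  exists g, lequiv L f g /\ z_superstable L g.
Proof.
pose D := \det L.
have hD : D != 0 by apply: det_nz.
pose v : 'cV[int]_n := Num.sg D *: (\adj L *m const_mx 1).
have hLv : L *m v = `|D| *: const_mx 1.
  by rewrite /v -scalemxAr mulmxA mul_mx_adj mul_scalar_mx scalerA -normrEsg.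
pose c : int := \sum_i `|f i 0|.
pose g0 := f + L *m (c *: v).
have hg0 : vnonneg g0.
  move=> i; rewrite /g0 -scalemxAr hLv addE mxE [X in _ * X]mxE mxE mulr1.
  apply: int_aux3; last exact: int_aux4.
  rewrite /c (bigD1 i) //= lerDl; apply: sumr_ge0 => k _; apply: normr_ge0.
have hfg0 : lequiv L f g0 by exists (c *: v); rewrite /g0 addrC addKr.
pose M := \sum_i (invmx (Lrat L) *m vr g0) i 0.
have hM0 : 0 <= M by apply: sumr_ge0 => i _; apply: Bnonneg.
pose N := Num.Def.archi_bound M.
have hbound w : vnonneg (g0 - L *m w) -> \sum_i w i 0 < N%:Z.
  move=> hw.
  have e : g0 - L *m w = g0 + L *m (- w) by rewrite mulmxN.
  have hle i : vr w i 0 <= (invmx (Lrat L) *m vr g0) i 0.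
    have := Bnonneg hM hw i; rewrite e Bshift // /vr map_mxN.
    by rewrite addEq [X in _ + X]mxE subr_ge0 => h; exact: h.
  have : (\sum_i vr w i 0) < (N%:Z)%:~R.
    apply: le_lt_trans (archi_boundP hM0); exact: ler_sum.
  have -> : \sum_i vr w i 0 = (\sum_i w i 0)%:~R.
    by rewrite rmorph_sum; apply: eq_bigr => i _; rewrite mxE.
  by rewrite ltr_int.
suff main : forall d : nat, forall w, vnonneg w -> vnonneg (g0 - L *m w) ->
    N%:Z - \sum_i w i 0 <= d%:Z -> exists g, lequiv L f g /\ z_superstable L g.
  apply: (main N 0); first by move=> i; rewrite mxE.
    by rewrite mulmx0 subr0.
  by rewrite big1 ?subr0 // => i _; rewrite mxE.
have step w : vnonneg w -> vnonneg (g0 - L *m w) ->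
    (exists g, lequiv L f g /\ z_superstable L g) \/
    exists w', [/\ vnonneg w', vnonneg (g0 - L *m w') &
                   \sum_i w i 0 + 1 <= \sum_i w' i 0].
  move=> hw hgw.
  case: (classic (z_superstable L (g0 - L *m w))) => hz.
    left; exists (g0 - L *m w); split => //.
    apply: lequiv_trans hfg0 _; exists (- w); by rewrite mulmxN addrC addKr.
  right; have [z [hz0 [nz hgz]]] := not_zss hgw hz.
  exists (w + z); split.
  - by move=> i; rewrite mxE; apply: addr_ge0.
  - by rewrite mulmxDr opprD addrA.
  - rewrite [X in _ <= X](eq_bigr (fun i => w i 0 + z i 0)); last by move=> i _; rewrite mxE.
    rewrite big_split /= lerD2l; exact: sum_ge1.
elim=> [|d IH] w hw hgw hd.
- case: (step w hw hgw) => // -[w' [_ hgw' hs]].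
  by case: (int_aux7 hd hs (hbound _ hgw')).
- case: (step w hw hgw) => // -[w' [hw' hgw' hs]].
  apply: (IH w') => //; exact: int_aux5 hd hs.
Qed.



Theorem mainTheorem7 (n : nat) (L : 'M[int]_n)
  (hM : nonsingular_M_matrix L) (hrow : nonneg_row_sums L) (f : 'cV[int]_n) :
  exists g : 'cV[int]_n,
    (forall h : 'cV[int]_n, energy_minimizer L f h <-> h = g) /\
    (forall h : 'cV[int]_n, (lequiv L f h /\ z_superstable L h) <-> h = g) /\
    (forall h : 'cV[int]_n, (lequiv L f h /\ chi_superstable L h) <-> h = g).
Proof.
have [g [hfg hg]] := existence hM f.
have hZ : Z_matrix L by case: hM.
have hzs : forall h, (lequiv L f h /\ z_superstable L h) <-> h = g.
  move=> h; split; last by move=> ->.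
  case=> hfh hh. apply: (zss_unique hZ hg hh); exact: lequiv_trans (lequiv_sym hfg) hfh.
exists g; split; [|split] => //.
- move=> h; split.
  + case=> hh hfh hmin.
    have [w [hw hdef]] := above hZ hg hh (lequiv_trans (lequiv_sym hfg) hfh).
    have h2 := hmin g hg.1 hfg.
    have h1 := energy_above hM hg.1 hw.
    rewrite -hdef in h1.
    have hS : \sum_i (vr w i 0) ^+ 2 <= 0 by lra.
    by rewrite hdef (sq_sum0 hS) mulmx0 addr0.
  + move=> ->; split => //; first exact: hg.1.
    move=> h' hh' hfh'.
    have [w [hw hdef]] := above hZ hg hh' (lequiv_trans (lequiv_sym hfg) hfh').
    have h1 := energy_above hM hg.1 hw.
    rewrite -hdef in h1.
    have hS : 0 <= \sum_i (vr w i 0) ^+ 2 by apply: sumr_ge0 => i _; apply: sqr_ge0.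
    lra.
- move=> h; split.
  + case=> hfh hch; apply/hzs; split => //; exact: chi_zss.
  + by move=> ->; split => //; exact: zss_chi.
Qed.
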